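(* Let $\{X_k(m): m\in\mathbb{R}_+,\ k\in\mathbb{N}\}$ be a family of integrable real random variables, independent in $k$, satisfying (C) $\mathbb{E}[X_k(m)]=0$ for all $m,k$; (W1) for every $\varepsilon>0$, $\lim_{m\to\infty}\sup_k\mathbb P(|X_k(m)|>\varepsilon)=0$; (W2) $\lim_{A\to\infty}\sup_{k,m}\mathbb E\big[|X_k(m)|\mathbf 1_{\{|X_k(m)|>A\}}\big]=0$. Let $(m_k)_{k\in\mathbb N}$ be positive reals with $\sum_k m_k=\infty$, $M_n=\sum_{k=1}^n m_k$, fix $K>0$, and for $1\le k\le n$ let $Y_k(m_k)=X_k(m_k)\mathbf 1_{\{|X_k(m_k)|<M_n/m_k\}}\mathbf 1_{\{m_k<K\}}$ (depending on $n$). Then $\lim_{n\to\infty}\max_{1\le k\le n}\frac{M_n}{m_k}\mathbb P\big(|X_k(m_k)|\mathbf 1_{\{m_k<K\}}\ge \tfrac{M_n}{m_k}\big)=0$ and $\lim_{n\to\infty}\max_{1\le k\le n}\frac{m_k}{M_n}\mathbb E[Y_k(m_k)^2]=0.$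
   Context: ''Independent in $k$'' means the families $\{X_k(m):m\in\mathbb R_+\}$ for different $k$ are independent. *)

(* Defs.v *)
From HB Require Import structures.
From mathcomp Require Import all_boot all_order all_algebra.
From mathcomp Require Import all_classical all_reals all_analysis.
Set Implicit Arguments. Unset Strict Implicit. Unset Printing Implicit Defensive.
Import Order.TTheory GRing.Theory Num.Theory.
Local Open Scope classical_set_scope.
Local Open Scope ring_scope.

Definition gen_sigma {d} {T : measurableType d} {R : realType}
  (X : nat -> R -> T -> R) (k : nat) : set (set T) :=
  <<s [set A | exists (m : R) (B : set R), 0 < m /\ measurable B /\ A = X k m @^-1` B] >>.

Definition indep_in_k {d} {T : measurableType d} {R : realType}
  (P : probability T R) (X : nat -> R -> T -> R) : Prop :=
  forall (s : seq nat) (E : nat -> set T),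
    uniq s ->
    (forall k, k \in s -> gen_sigma X k (E k)) ->
    P (\big[setI/setT]_(k <- s) E k) = (\prod_(k <- s) P (E k))%E.

(* Main.v *)
Require Import Defs.
From HB Require Import structures.
From mathcomp Require Import all_boot all_order all_algebra.
From mathcomp Require Import all_classical all_reals all_analysis.
From mathcomp Require Import measurable_realfun.
From mathcomp Require Import ring lra.
Import Order.TTheory GRing.Theory Num.Theory.
Local Open Scope classical_set_scope.
Local Open Scope ring_scope.


Lemma cvg0_aux (R : realType) (u : nat -> \bar R) :
  (forall e : R, 0 < e -> \forall n \near \oo, (0 <= u n <= e%:E)%E) -> u @ \oo --> 0%E.
Proof.
move=> H; apply/fine_cvgP; split.
  have := H 1 ltr01; apply: filterS => n /andP[h0 h1].
  by rewrite ge0_fin_numE// (le_lt_trans h1) ?ltry.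
apply/cvgrPdist_le => e e0; have := H e e0; apply: filterS => n /andP[h0 h1].
rewrite sub0r normrN /= ger0_norm ?fine_ge0//.
by rewrite -lee_fin fineK ?(ge0_fin_numE h0) ?(le_lt_trans h1) ?ltry.
Qed.

Lemma near_pinfty {R : realType} {Q : R -> Prop} : (\forall x \near +oo, Q x) -> exists A0, forall x, A0 < x -> Q x.
Proof. move=> [M [_ HM]]; by exists M. Qed.

Lemma near_nat {Q : nat -> Prop} : (\forall x \near \oo, Q x) -> exists N, forall n, (N <= n)%N -> Q n.
Proof. move=> [N _ HN]; by exists N. Qed.

Section S.
Context {d} {T : measurableType d} {R : realType} (P : probability T R).

Lemma mset_lt (Z : T -> R) (mZ : measurable_fun setT Z) (a : R) :
  measurable [set w | a < `|Z w|].
Proof.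
have := (measurableT_comp (@measurable_realfun.normr_measurable R setT) mZ) measurableT _ (measurable_itv `]a, +oo[).
by rewrite setTI; congr measurable; apply/seteqP; split => w /=; rewrite in_itv /= andbT.
Qed.

Lemma mset_le (Z : T -> R) (mZ : measurable_fun setT Z) (a : R) :
  measurable [set w | a <= `|Z w|].
Proof.
have := (measurableT_comp (@measurable_realfun.normr_measurable R setT) mZ) measurableT _ (measurable_itv `[a, +oo[).
by rewrite setTI; congr measurable; apply/seteqP; split => w /=; rewrite in_itv /= andbT.
Qed.

Lemma markov_tail (Z : T -> R) (mZ : measurable_fun setT Z) (a : R) : 0 < a ->
  (a%:E * P [set w | (a <= `|Z w|)%R] <= \int[P]_(w in [set w | (a / 2 < `|Z w|)%R]) `|Z w|%:E)%E.
Proof.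
move=> a0.
have mnZ : measurable_fun [set: T] (EFin \o (Num.norm \o Z)).
  by apply: measurableT_comp => //; apply: measurableT_comp => //; exact: measurable_realfun.normr_measurable.
rewrite -integral_cst; last exact: mset_le.
apply: (@le_trans _ _ (\int[P]_(w in [set w | (a <= `|Z w|)%R]) `|Z w|%:E)%E).
  apply: ge0_le_integral => //; [exact: mset_le| |exact: measurable_funTS].
  by move=> w _; rewrite lee_fin ltW.
apply: ge0_subset_integral => //; [exact: mset_le|exact: mset_lt|exact: measurable_funTS|].
move=> w /= h; apply: lt_le_trans h.
by rewrite ltr_pdivrMr // ltr_pMr // ltr1n.
Qed.

Lemma trunc2 (Z : T -> R) (mZ : measurable_fun setT Z) (a B : R) : 0 < a -> 0 <= B ->
  ('E_P[fun w => ((Z w * (if `|Z w| < a then 1 else 0)) ^+ 2)%R]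
   <= (B ^+ 2)%:E + a%:E * \int[P]_(w in [set w | (B < `|Z w|)%R]) `|Z w|%:E)%E.
Proof.
move=> a0 B0.
have mnZ : measurable_fun [set: T] (EFin \o (Num.norm \o Z)).
  by apply: measurableT_comp => //; apply: measurableT_comp => //; exact: measurable_realfun.normr_measurable.
have mS := mset_lt _ mZ B.
set g := (fun w => (B ^+ 2)%:E + a%:E * ((fun w => `|Z w|%:E) \_ [set w | (B < `|Z w|)%R]) w)%E.
have mr : measurable_fun [set: T] ((fun w => `|Z w|%:E) \_ [set w | (B < `|Z w|)%R]).
  exact/(measurable_restrictT _ _).1/measurable_funTS.
have r0 : forall w, (0 <= ((fun w => `|Z w|%:E) \_ [set w | (B < `|Z w|)%R]) w)%E.
  by move=> w; apply: erestrict_ge0 => x _; rewrite lee_fin.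
have H2 : (\int[P]_w g w = (B ^+ 2)%:E * P setT + a%:E * \int[P]_(w in [set w | (B < `|Z w|)%R]) `|Z w|%:E)%E.
  rewrite /g ge0_integralD //.
  + rewrite integral_cst //.
    rewrite ge0_integralZl //; last by rewrite lee_fin ltW. by rewrite -integral_mkcond.
  + by move=> w _; rewrite lee_fin sqr_ge0.
  + by move=> w _; apply: mule_ge0; [rewrite lee_fin ltW|exact: r0].
  + exact: (measurable_funeM _ mr).
have HP : P setT = 1%E := probability_setT P.
rewrite HP mule1 in H2.
rewrite -H2 unlock.
apply: ge0_le_integral => //.
- by move=> w _; rewrite lee_fin sqr_ge0.
- apply/measurable_EFinP; apply: measurable_funX.
  apply: measurable_funM => //.
  have mnR : measurable_fun [set: T] (fun w => `|Z w|).
    exact: measurableT_comp (@measurable_realfun.normr_measurable R setT) mZ.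
  apply: measurable_fun_ifT => //; exact: (measurable_fun_ltr mnR (measurable_cst a)).
- by apply: emeasurable_funD => //; exact: (measurable_funeM _ mr).
move=> w _; rewrite /g patchE.
have p0 : (point : \bar R) = 0%E by [].
have ge0r : (0 <= a%:E * (if w \in [set w0 | (B < `|Z w0|)%R] then `|Z w|%:E else point))%E.
  by apply: mule_ge0; [rewrite lee_fin ltW|case: ifP => _; rewrite ?p0 // lee_fin].
case: ifPn => ha; last first.
  by rewrite mulr0 expr0n /=; apply: adde_ge0 => //; rewrite lee_fin sqr_ge0.
rewrite mulr1.
have [hB|hB] := leP `|Z w| B.
  apply: (le_trans _ (leeDl _ ge0r)).
  by rewrite lee_fin -real_normK ?num_real // ler_sqr ?nnegrE.
have hw : w \in [set w0 | (B < `|Z w0|)%R] by exact: mem_set.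
rewrite hw -EFinM -EFinD lee_fin.
apply: ler_wpDl; first exact: sqr_ge0.
by rewrite -real_normK ?num_real // expr2 ler_wpM2r // ltW.
Qed.

Lemma W2_bound (X : nat -> R -> T -> R) :
  ((fun A : R => ereal_sup [set x | exists (k : nat) (m : R), 0 < m /\
                       x = (\int[P]_(w in [set w | (A < `|X k m w|)%R]) (`|X k m w|)%:E)%E])
     @ +oo --> 0%E) ->
  forall e : R, 0 < e -> exists A0 : R, forall A, A0 < A -> forall k m, 0 < m ->
   (\int[P]_(w in [set w | (A < `|X k m w|)%R]) (`|X k m w|)%:E <= e%:E)%E.
Proof.
move=> h e e0.
have [hfin hcv] := (fine_cvgP _ _).1 h.
have [A1 HA1] := near_pinfty hfin.
have [A2 HA2] := near_pinfty ((cvgrPdist_le _ _).1 hcv e e0).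
exists (Num.max A1 A2) => A; rewrite gt_max => /andP[h1 h2] k m m0.
have := HA2 _ h2; have := HA1 _ h1; move=> /= fS.
rewrite sub0r normrN => hd.
have Hs := fS.
move: Hs; set S := ereal_sup _ => fS' .
have Hs : (S <= e%:E)%E.
  by rewrite -(fineK fS') lee_fin (le_trans (ler_norm _)).
apply: le_trans Hs; apply: ereal_sup_ubound; by exists k, m.
Qed.
End S.

Theorem lemma5p1 (d : measure_display) (T : measurableType d) (R : realType)
  (P : probability T R) (X : nat -> R -> T -> R) (mk : nat -> R) (K : R) :
  (forall k m, 0 < m -> measurable_fun setT (X k m)) ->
  (forall k m, 0 < m -> P.-integrable setT (EFin \o X k m)) ->
  indep_in_k P X ->
  (* (C) *)
  (forall k m, 0 < m -> ('E_P[X k m] = 0)%E) ->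
  (* (W1) *)
  (forall eps : R, 0 < eps ->
     (fun m : R => ereal_sup [set P [set w | eps < `|X k m w|] | k in [set: nat]])
       @ +oo --> 0%E) ->
  (* (W2) *)
  ((fun A : R => ereal_sup [set x | exists (k : nat) (m : R), 0 < m /\
                       x = (\int[P]_(w in [set w | (A < `|X k m w|)%R]) (`|X k m w|)%:E)%E])
     @ +oo --> 0%E) ->
  (forall k, 0 < mk k) ->
  ((fun n => \sum_(1 <= k < n.+1) mk k) @ \oo --> +oo) ->
  0 < K ->
  let M := fun n : nat => \sum_(1 <= k < n.+1) mk k in
  let Y := fun (n k : nat) (w : T) =>
     X k (mk k) w * (if `|X k (mk k) w| < M n / mk k then 1 else 0)
       * (if mk k < K then 1 else 0) in
  ((fun n : nat => \big[maxe/-oo%E]_(1 <= k < n.+1)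
       ((M n / mk k)%:E *
          P [set w | (M n / mk k <= `|X k (mk k) w| * (if mk k < K then 1 else 0))%R])%E)
     @ \oo --> 0%E) /\
  ((fun n : nat => \big[maxe/-oo%E]_(1 <= k < n.+1)
       ((mk k / M n)%:E * 'E_P[fun w => (Y n k w ^+ 2)%R])%E)
     @ \oo --> 0%E).
Proof.
move=> hmeas hint hind hC hW1 hW2 mk0 hMinf K0 M Y.
have Mpos : forall L : R, exists N, forall n, (N <= n)%N -> L <= M n /\ (1 <= n)%N.
  move=> L; have [N HN] := near_nat ((cvgryPge _).1 hMinf L).
  by exists (maxn N 1) => n; rewrite geq_max => /andP[h1 h2]; split => //; exact: HN.
have bigmax_bd : forall (n : nat) (f : nat -> \bar R) (e : R), (1 <= n)%N -> 0 <= e ->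
    (forall k, (1 <= k <= n)%N -> (0 <= f k <= e%:E)%E) ->
    (0 <= \big[maxe/-oo%E]_(1 <= k < n.+1) f k <= e%:E)%E.
  move=> n f e n1 e0 hf; apply/andP; split.
    rewrite big_ltn // le_max; apply/orP; left.
    by have /andP[] := hf 1%N n1.
  rewrite big_nat_cond; apply: bigmax_le => [|k]; first exact: leNye.
  rewrite andbT => /andP[k1 kn].
  by have /andP[] := hf k (introT andP (conj k1 kn)).
split.
- apply: cvg0_aux => e e0.
  have [A0 HA0] := W2_bound P _ hW2 _ e0.
  have [N HN] := Mpos (2 * K * (`|A0| + 1)).
  near_simpl; exists N => // n Nn.
  have [hL n1] := HN n Nn.
  apply: bigmax_bd => // [|k /andP[k1 kn]]; first exact: ltW.
  have mkk := mk0 k; rewrite /=.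
  have Mn0 : 0 < M n.
    apply: lt_le_trans hL; apply: mulr_gt0; first exact: mulr_gt0.
    by rewrite ltr_pwDr // normr_ge0.
  set a := M n / mk k.
  have a0 : 0 < a by exact: divr_gt0.
  apply/andP; split; first by apply: mule_ge0 => //; rewrite lee_fin ltW.
  have [hK|hK] := ltP (mk k) K.
    have -> : [set w | (a <= `|X k (mk k) w| * 1)%R]
            = [set w | (a <= `|X k (mk k) w|)%R].
      by apply/seteqP; split => w /=; rewrite mulr1.
    apply: le_trans (markov_tail P _ (hmeas k _ mkk) _ a0) _.
    apply: HA0 => //.
    have ha : a * mk k = M n by rewrite /a mulfVK // gt_eqF.
    have c0 : 0 < `|A0| + 1 by rewrite ltr_pwDr // normr_ge0.
    have hA : A0 <= `|A0| by exact: ler_norm.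
    nra.
  have -> : [set w | (a <= `|X k (mk k) w| * 0)%R] = set0.
    apply/seteqP; split => w //=; rewrite mulr0.
    by move=> h; move: (lt_le_trans a0 h); rewrite ltxx.
  by rewrite measure0 mule0 lee_fin ltW.
- apply: cvg0_aux => e e0.
  have e20 : 0 < e / 2 by rewrite divr_gt0.
  have [A0 HA0] := W2_bound P _ hW2 _ e20.
  set B := `|A0| + 1.
  have B0 : 0 < B by rewrite ltr_pwDr // normr_ge0.
  have hAB : A0 < B by rewrite /B (le_lt_trans (ler_norm _)) // ltrDl.
  have [N HN] := Mpos (K * (2 * B ^+ 2 / e + 1)).
  near_simpl; exists N => // n Nn.
  have [hL n1] := HN n Nn.
  apply: bigmax_bd => // [|k /andP[k1 kn]]; first exact: ltW.
  have mkk := mk0 k; rewrite /=.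
  have c0 : 0 < 2 * B ^+ 2 / e + 1.
    have : 0 <= 2 * B ^+ 2 / e.
      by apply: divr_ge0; [apply: mulr_ge0 => //; exact: sqr_ge0| exact: ltW].
    lra.
  have Mn0 : 0 < M n by apply: lt_le_trans hL; apply: mulr_gt0.
  set a := M n / mk k.
  have a0 : 0 < a by exact: divr_gt0.
  have ha : a * mk k = M n by rewrite /a mulfVK // gt_eqF.
  have b0 : 0 < mk k / M n by exact: divr_gt0.
  have hab : mk k / M n * a = 1 by rewrite /a mulrA divfK ?gt_eqF // divff // gt_eqF.
  have [hK|hK] := ltP (mk k) K; last first.
    rewrite (_ : (fun w => Y n k w ^+ 2) = cst 0).
      by rewrite expectation_cst mule0 lexx lee_fin ltW.
    have hK' : (mk k < K) = false by rewrite ltNge hK.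
    by apply: funext => w; rewrite /Y hK' /= !mulr0 expr0n.
  rewrite (_ : (fun w => Y n k w ^+ 2) =
     (fun w => (X k (mk k) w * (if `|X k (mk k) w| < a then 1 else 0)) ^+ 2)); last first.
    by apply: funext => w; rewrite /Y hK mulr1.
  have hE := trunc2 P _ (hmeas k _ mkk) _ _ a0 (ltW B0).
  have hI := HA0 B hAB k (mk k) mkk.
  set I := (\int[P]_(w in _) _)%E in hE hI.
  have I0 : (0 <= I)%E by apply: integral_ge0 => w _; rewrite lee_fin.
  have fI : I \is a fin_num by rewrite ge0_fin_numE // (le_lt_trans hI) ?ltry.
  have E0 : (0 <= 'E_P[fun w => ((X k (mk k) w * (if `|X k (mk k) w| < a then 1 else 0)) ^+ 2)%R])%E.
    by rewrite unlock; apply: integral_ge0 => w _; rewrite lee_fin sqr_ge0.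
  apply/andP; split; first by apply: mule_ge0 => //; rewrite lee_fin ltW.
  apply: le_trans (lee_wpmul2l _ hE) _; first by rewrite lee_fin ltW.
  rewrite -(fineK fI) (_ : ((mk k / M n)%:E * ((B ^+ 2)%:E + a%:E * (fine I)%:E) = ((mk k / M n) * (B ^+ 2 + a * fine I))%:E)%E) ?lee_fin //.
  move: hI; rewrite -(fineK fI) lee_fin => hI.
  have hq : 2 * B ^+ 2 / e * e = 2 * B ^+ 2 by rewrite divfK // gt_eqF.
  have hB2 : B ^+ 2 * 2 <= e * a.
    have h : K * (2 * B ^+ 2 / e + 1) <= a * mk k by rewrite ha.
    set q := 2 * B ^+ 2 / e in c0 hq h.
    have h2 : q + 1 <= a by nra.
    nra.
  set b := mk k / M n in b0 hab *.
  nra.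
Qed.
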